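(* Let $n > 0$ be real and $m \ge 1$ an integer. For $a \in (0,n]$ let $\Delta_a^m$ be the set of real polynomials $h(t) = u_m t^m + \dots + u_1 t + u_0$ of degree exactly $m$ with all coefficients $u_i \ge 0$ such that, as a function on $[-n,n]$, $h$ attains its minimum at the point $-a$, and $h'(-a) = 0$. Then: (1) If $m$ is even, then $$ \min_{a\in(0,n]}\ \min_{h\in\Delta_a^m} \frac{h(n)}{2h(n)-2h(-a)} = \min_{h\in\Delta_n^m}\frac{h(n)}{2h(n)-2h(-n)} = \frac{h^*(n)}{2h^*(n)-2h^*(-n)} = \frac{m+1}{4m}, $$ where $h^*(t) = t^m + m n^{m-1} t$ (which belongs to $\Delta_n^m$). (2) If $m \ge 2$ is odd, then $$ \inf_{h\in\Delta_n^m}\frac{h(n)}{2h(n)-2h(-n)} \ge \min_{h\in\Delta_n^{m-1}}\frac{h(n)}{2h(n)-2h(-n)}. $$ *)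

(* Defs.v *)
From HB Require Import structures.
From mathcomp Require Import all_boot all_order all_algebra.
Set Implicit Arguments. Unset Strict Implicit. Unset Printing Implicit Defensive.
Import Order.TTheory GRing.Theory Num.Theory.
Local Open Scope ring_scope.

Definition DeltaAM {R : rcfType} (n a : R) (m : nat) (h : {poly R}) : Prop :=
  [/\ size h = m.+1,
      (forall i : nat, 0 <= h`_i),
      (forall t : R, - n <= t <= n -> h.[- a] <= h.[t])
    & (h^`()).[- a] = 0].

Definition ratioH {R : rcfType} (n a : R) (h : {poly R}) : R :=
  h.[n] / (2 * h.[n] - 2 * h.[- a]).

Definition hstar {R : rcfType} (n : R) (m : nat) : {poly R} :=
  'X^m + (m%:R * n ^+ m.-1) *: 'X.

(* Main.v *)
Require Import Defs.
From HB Require Import structures.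
From mathcomp Require Import all_boot all_order all_algebra.
From Stdlib Require Import Ring.
Import Order.TTheory GRing.Theory Num.Theory.

Section G.
Variables (T : Type) (z o : T) (ad mu : T -> T -> T) (op : T -> T).
Hypothesis Rth : @ring_theory T z o ad mu (fun x y => ad x (op y)) op eq.
Add Ring Rr : Rth.
Local Notation "x + y" := (ad x y).
Local Notation "x * y" := (mu x y).
Local Notation "- x" := (op x).
Local Notation "x - y" := (ad x (op y)).
Local Notation one := o.
Local Notation two := (ad o o).
Local Notation four := (ad o (ad o (ad o o))).
Lemma g_ratio (hn hm J : T) : hn * (four * (J + one)) - ((J + one) + one) * (two * hn - two * hm) = two * (J * hn + ((J + one) + one) * hm).
Proof. ring. Qed.
Lemma g_lin (u c y J K I : T) : J * (u * c) + K * (u * y) + - (two * (u * (I * y))) = u * (J * c + K * y - two * (I * y)).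
Proof. ring. Qed.
Lemma g_odd (c b J I : T) : J * c + ((J + one) + one) * (- b) - two * ((I + one) * (- b)) = J * (c - b) + two * (I * b).
Proof. ring. Qed.
Lemma g_even (c b J k : T) : J * c + ((J + one) + one) * b - two * ((J + one - k) * b) = J * (c - b) + two * (k * b).
Proof. ring. Qed.
Lemma g_D (u c y M I : T) : M * (u * c - u * y) + u * (I * y) = u * (M * c - M * y + I * y).
Proof. ring. Qed.
Lemma g_Dpos (c y I k : T) : (I + k) * c - (I + k) * y + I * y = k * (c - y) + I * c.
Proof. ring. Qed.
Lemma g_num (q n M : T) : q * n + M * q * n = (M + one) * (q * n).
Proof. ring. Qed.
Lemma g_den (q n M : T) : two * (q * n + M * q * n) - two * (q * n + M * q * (- n)) = (four * M) * (q * n).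
Proof. ring. Qed.
Lemma g_diff (A B c t n : T) : (A + c * t) - (B + c * (- n)) = (A - B) + c * (t - - n).
Proof. ring. Qed.
Lemma g_xd (x u k p : T) : x * (u * k * p) = u * (k * (x * p)).
Proof. ring. Qed.
End G.

Local Open Scope ring_scope.

Lemma Rth (R : comPzRingType) : @ring_theory R 0 1 +%R *%R (fun x y => x - y) -%R eq.
Proof. split=> //=; [exact: add0r|exact: addrC|exact: addrA|exact: mul1r|exact: mulrC|exact: mulrA|exact: mulrDl|exact: subrr]. Qed.

Section M.
Variable R : rcfType.
Notation RT := (Rth R).

Lemma xderiv (h : {poly R}) x :
  x * (h^`()).[x] = \sum_(i < size h) h`_i * (i%:R * x ^+ i).
Proof.
case E: (size h) => [|s].
  by move/eqP: E; rewrite size_poly_eq0 => /eqP ->; rewrite deriv0 horner0 mulr0 big_ord0.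
rewrite big_ord_recl /= mul0r mulr0 add0r /deriv horner_poly E /= mulr_sumr.
apply: eq_bigr => i _; rewrite /bump /= add1n exprS -[_ *+ i.+1]mulr_natr; exact: (@g_xd _ _ _ _ _ _ RT).
Qed.

Lemma key (h : {poly R}) (n a : R) (j : nat) :
  0 <= a -> a <= n -> (forall i, 0 <= h`_i) ->
  (forall i : nat, (i < size h)%N -> ~~ odd i -> (i <= j.+1)%N) ->
  0 <= j%:R * h.[n] + j.+2%:R * h.[-a] - 2 * (-a * (h^`()).[-a]).
Proof.
move=> a0 an hc hev.
have -> : j%:R * h.[n] + j.+2%:R * h.[-a] - 2 * (-a * (h^`()).[-a]) =
  \sum_(i < size h) h`_i * (j%:R * n ^+ i + j.+2%:R * (-a) ^+ i - 2 * (i%:R * (-a) ^+ i)).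
  rewrite xderiv !horner_coef !mulr_sumr -sumrN -!big_split /=.
  by apply: eq_bigr => i _; exact: (@g_lin _ _ _ _ _ _ RT).
apply: sumr_ge0 => -[i Hi] _ /=; apply: mulr_ge0 (hc i) _.
have n0 : 0 <= n := le_trans a0 an.
have b0 : 0 <= a ^+ i := exprn_ge0 i a0.
have bc : a ^+ i <= n ^+ i by apply: lerXn2r; rewrite ?nnegrE.
rewrite exprNn -signr_odd; case: (boolP (odd i)) => oi.
  move: oi Hi; case: i b0 bc => [|i'] b0 bc // oi Hi.
  rewrite expr1 mulN1r -[j.+2%:R]natr1 -[j.+1%:R]natr1 -[i'.+1%:R]natr1.
  rewrite (@g_odd _ _ _ _ _ _ RT).
  apply: addr_ge0; apply: mulr_ge0; [exact: ler0n | by rewrite subr_ge0 | by rewrite addr_ge0 ?ler01 | by rewrite mulr_ge0 ?ler0n].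
have := hev i Hi oi => hij.
have Ei : i%:R = j%:R + 1 - (j.+1 - i)%:R :> R.
  by rewrite natr1 -natrB ?leq_subr // subKn.
rewrite expr0 mul1r Ei -[j.+2%:R]natr1 -[j.+1%:R]natr1.
rewrite (@g_even _ _ _ _ _ _ RT).
apply: addr_ge0; apply: mulr_ge0; [exact: ler0n | by rewrite subr_ge0 | by rewrite addr_ge0 ?ler01 | by rewrite mulr_ge0 ?ler0n].
Qed.

Lemma Dpos (h : {poly R}) (n a : R) (m : nat) :
  0 <= a -> a <= n -> 0 < n -> (forall i, 0 <= h`_i) -> size h = m.+1 -> (0 < m)%N ->
  (h^`()).[-a] = 0 -> 0 < h.[n] - h.[-a].
Proof.
move=> a0 an n0 hc sz m0 hd.
have E : m%:R * (h.[n] - h.[-a]) + (-a * (h^`()).[-a]) =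
  \sum_(i < size h) h`_i * (m%:R * n ^+ i - m%:R * (-a) ^+ i + i%:R * (-a) ^+ i).
  rewrite xderiv !horner_coef -sumrB mulr_sumr -big_split /=.
  by apply: eq_bigr => i _; exact: (@g_D _ _ _ _ _ _ RT).
have yc : forall i, (-a) ^+ i <= n ^+ i.
  move=> i; apply: le_trans (ler_norm _) _.
  by rewrite normrX normrN ger0_norm // lerXn2r // nnegrE ?(le_trans a0 an).
have : 0 < m%:R * (h.[n] - h.[-a]) + (-a * (h^`()).[-a]).
  rewrite E sz big_ord_recr /=.
  apply: ltr_wpDl.
    apply: sumr_ge0 => -[i Hi] _ /=; apply: mulr_ge0 (hc i) _.
    have Em : m%:R = i%:R + (m - i)%:R :> R by rewrite -natrD subnKC // ltnW.
    rewrite Em (@g_Dpos _ _ _ _ _ _ RT).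
    by apply: addr_ge0; apply: mulr_ge0; rewrite ?ler0n ?subr_ge0 ?exprn_ge0 ?yc // ltW.
  rewrite subrK; apply: mulr_gt0; last by rewrite mulr_gt0 ?ltr0n ?exprn_gt0.
  rewrite lt_def hc andbT.
  have : lead_coef h != 0 by rewrite lead_coef_eq0 -size_poly_eq0 sz.
  by rewrite lead_coefE sz.
by rewrite hd mulr0 addr0 pmulr_rgt0 // ltr0n.
Qed.

Lemma ratio_bd (h : {poly R}) (n a : R) (j m : nat) :
  0 <= a -> a <= n -> 0 < n -> (forall i, 0 <= h`_i) -> size h = m.+1 -> (0 < m)%N ->
  (h^`()).[-a] = 0 -> (forall i : nat, (i < size h)%N -> ~~ odd i -> (i <= j.+1)%N) ->
  j.+2%:R / (4 * j.+1%:R) <= ratioH n a h.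
Proof.
move=> a0 an n0 hc sz m0 hd hev.
have D := Dpos h n a m a0 an n0 hc sz m0 hd.
have K := key h n a j a0 an hc hev; rewrite hd mulr0 mulr0 subr0 in K.
rewrite /ratioH.
have q0 : 0 < 2 * h.[n] - 2 * h.[-a] by rewrite -mulrBr mulr_gt0 ?ltr0n.
rewrite ler_pdivlMr // mulrAC ler_pdivrMr ?mulr_gt0 ?ltr0n // -subr_ge0.
rewrite -[j.+2%:R]natr1 -[j.+1%:R]natr1 (@g_ratio _ _ _ _ _ _ RT) !natr1.
by apply: mulr_ge0 => //; rewrite addr_ge0 ?ler01.
Qed.

Lemma hstar_prop (n : R) (M : nat) : 0 < n -> ~~ odd M -> (0 < M)%N ->
  DeltaAM n n M (hstar n M) /\ ratioH n n (hstar n M) = M.+1%:R / (4 * M%:R).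
Proof.
case: M => [|M] // n0 ev _.
have oM : odd M by move: ev => /=; rewrite negbK.
have M1 : (1 <= M)%N by case: M oM ev.
have hE : forall x, (hstar n M.+1).[x] = x ^+ M.+1 + (M.+1%:R * n ^+ M) * x.
  by move=> x; rewrite /hstar hornerD hornerXn hornerZ hornerX.
have eN : (- n) ^+ M.+1 = n ^+ M.+1 by rewrite exprNn -signr_odd (negbTE ev) expr0 mul1r.
have c0 : 0 <= M.+1%:R * n ^+ M by rewrite mulr_ge0 ?ler0n ?exprn_ge0 ?ltW.
split; last first.
  rewrite /ratioH !hE eN exprSr (@g_den _ _ _ _ _ _ RT) (@g_num _ _ _ _ _ _ RT).
  rewrite -mulf_div divff ?mulr1 ?natr1 //.
  by rewrite mulf_neq0 ?expf_neq0 // gt_eqF.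
split.
- rewrite /hstar size_polyDl; first exact: size_polyXn.
  apply: leq_ltn_trans (size_scale_leq _ _) _; rewrite size_polyX.
  by rewrite (_ : size _ = M.+2) ?ltnS //; exact: size_polyXn.
- move=> i; rewrite /hstar coefD coefXn coefZ coefX.
  by rewrite addr_ge0 ?ler0n // mulr_ge0 ?ler0n.
- move=> t /andP[tl tu]; rewrite -subr_ge0 !hE (@g_diff _ _ _ _ _ _ RT) subrXX.
  rewrite [_ * (t - - n)]mulrC -mulrDr; apply: mulr_ge0; first by rewrite subr_ge0.
  have -> : M.+1%:R * n ^+ M = \sum_(i < M.+1) n ^+ M.
    by rewrite sumr_const card_ord mulr_natl.
  rewrite -big_split /=; apply: sumr_ge0 => -[i Hi] _ /=.
  rewrite -[n ^+ M]opprK subr_ge0; apply: lerNnormlW.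
  have -> : n ^+ M = n ^+ (M - i) * n ^+ i by rewrite -exprD subnK.
  rewrite normrM !normrX normrN (ger0_norm (ltW n0)).
  have n0' : 0 <= n := ltW n0.
  apply: ler_pM; [exact: exprn_ge0 (normr_ge0 _) | exact: exprn_ge0 n0' | | by []].
  by apply: lerXn2r; rewrite ?nnegrE ?normr_ge0 // ler_norml tl tu.
- rewrite /hstar derivD derivXn derivZ derivX hornerD hornerMn hornerZ hornerXn hornerC mulr1 /=.
  rewrite exprNn -signr_odd oM expr1 mulN1r mulNrn mulr_natl.
  by rewrite addNr.
Qed.
End M.
Theorem mainTheorem7 (R : rcfType) (n : R) (m : nat) (hn : 0 < n) (hm : (1 <= m)%N) :
  (~~ odd m ->
     [/\ DeltaAM n n m (hstar n m),
         ratioH n n (hstar n m) = (m.+1)%:R / (4 * m%:R),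
         (forall (a : R) (h : {poly R}), 0 < a <= n -> DeltaAM n a m h ->
            (m.+1)%:R / (4 * m%:R) <= ratioH n a h)
       & (forall h : {poly R}, DeltaAM n n m h -> ratioH n n (hstar n m) <= ratioH n n h)])
  /\
  (odd m -> (2 <= m)%N ->
     exists2 h0 : {poly R}, DeltaAM n n m.-1 h0 &
       (forall g : {poly R}, DeltaAM n n m.-1 g -> ratioH n n h0 <= ratioH n n g) /\
       (forall h : {poly R}, DeltaAM n n m h -> ratioH n n h0 <= ratioH n n h)).
Proof.
split.
- move=> ev.
  have [HD Hr] := hstar_prop _ n _ hn ev hm.
  case: m hm ev HD Hr => [|j] // _ ev HD Hr.
  have H3 : forall (a : R) (h : {poly R}), 0 < a <= n -> DeltaAM n a j.+1 h ->
      j.+2%:R / (4 * j.+1%:R) <= ratioH n a h.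
    move=> a h /andP[a0 an] [sz hc _ hd].
    apply: (ratio_bd _ h n a j j.+1 (ltW a0) an hn hc sz _ hd) => //.
    by move=> i; rewrite sz ltnS.
  split => // h Hh; rewrite Hr; apply: H3 Hh.
  by rewrite hn lexx.
- move=> om m2.
  case: m hm om m2 => [|[|j]] // _ om _.
  have ev : ~~ odd j.+1 by move: om => /=.
  have [HD Hr] := hstar_prop _ n _ hn ev isT.
  exists (hstar n j.+1) => //; split.
  + move=> g [sz hc _ hd]; rewrite Hr.
    apply: (ratio_bd _ g n n j j.+1 (ltW hn) (lexx n) hn hc sz isT hd).
    by move=> i; rewrite sz ltnS.
  + move=> h [sz hc _ hd]; rewrite Hr.
    apply: (ratio_bd _ h n n j j.+2 (ltW hn) (lexx n) hn hc sz isT hd).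
    move=> i; rewrite sz ltnS leq_eqVlt => /orP[/eqP -> | //].
    by rewrite om.
Qed.
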